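(* Strengthened arities, with the composition $(H,\rho)\cdot(K,\sigma):=(H\cdot K,\theta)$ where $\theta_{X,(Z,e)}:=H(\sigma_{X,(Z,e)})\circ\rho_{K(X),(Z,e)}\colon H(K(X))\cdot Z\to H(K(X\cdot Z))$, form a strict monoidal category.
   Context: Conventions: for endofunctors $F,G$, $F\cdot G$ denotes $F\circ G$; whiskering is written $F\alpha$, $\alpha F$. An endofunctor is $\omega$-cocontinuous if it preserves colimits of $\omega$-chains; $\mathrm{End}^\omega({\mathsf{Set}})$ is the category of such endofunctors of ${\mathsf{Set}}$. $\mathrm{End}^\omega_*({\mathsf{Set}})$ is the category of pointed $\omega$-cocontinuous endofunctors $(F,e)$, $e\colon I\to F$ with $I$ the identity functor; morphisms $f$ satisfy $f\circ e_1=e_2$. Pointed endofunctors compose as $(Z_1\cdot Z_2,e_1\cdot e_2)$, $e_1\cdot e_2$ the horizontal composite. A strengthened arity is a pair $(H,\theta)$ where $H$ is an $\omega$-cocontinuous endofunctor of $\mathrm{End}^\omega({\mathsf{Set}})$ and $\theta$ is a natural transformation with components $\theta_{X,(Z,e)}\colon H(X)\cdot Z\to H(X\cdot Z)$, natural in $X\in\mathrm{End}^\omega({\mathsf{Set}})$ and $(Z,e)\in\mathrm{End}^\omega_*({\mathsf{Set}})$, such that $\theta_{X,(I,1_I)}=1_{H(X)}$ and $\theta_{X,(Z_1\cdot Z_2,e_1\cdot e_2)}=\theta_{X\cdot Z_1,(Z_2,e_2)}\circ(\theta_{X,(Z_1,e_1)}Z_2)$. A morphism $(H_1,\theta_1)\to(H_2,\theta_2)$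 is a natural transformation $m\colon H_1\to H_2$ with $m_{X\cdot Z}\circ(\theta_1)_{X,Z}=(\theta_2)_{X,Z}\circ m_XZ$ for all $X$ and pointed $Z$. *)

(* Defs.v *)
(* Endofunctors of Set are modelled as raw data (object map on Type,
   morphism map); functor laws, omega-cocontinuity, naturality are separate
   predicates.  Primitive projections give definitional eta for records, so
   X . I, I . X and (X . Y) . Z = X . (Y . Z) hold by conversion. *)
Set Primitive Projections.

Record Fun : Type := MkFun {
  fob : Type -> Type ;
  fmap : forall A B : Type, (A -> B) -> fob A -> fob B }.
Arguments fmap _ {A B} _ _.

Definition Nat (F G : Fun) : Type := forall A : Type, fob F A -> fob G A.

Definition is_nat (F G : Fun) (a : Nat F G) : Prop :=
  forall (A B : Type) (f : A -> B) (x : fob F A), a B (fmap F f x) = fmap G f (a A x).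
Arguments is_nat {F G} a.

Definition is_functor (F : Fun) : Prop :=
  (forall A (x : fob F A), fmap F (fun a : A => a) x = x) /\
  (forall A B C (f : A -> B) (g : B -> C) (x : fob F A),
      fmap F (fun a => g (f a)) x = fmap F g (fmap F f x)).

Definition is_colim_Set (D : nat -> Type) (d : forall n, D n -> D (S n))
  (C : Type) (c : forall n, D n -> C) : Prop :=
  (forall n x, c (S n) (d n x) = c n x) /\
  forall (Y : Type) (y : forall n, D n -> Y),
    (forall n x, y (S n) (d n x) = y n x) ->
    exists u : C -> Y, (forall n x, u (c n x) = y n x) /\
      forall u' : C -> Y, (forall n x, u' (c n x) = y n x) -> forall z, u' z = u z.

Definition omega_cocontinuous (F : Fun) : Prop :=
  forall D d C c, is_colim_Set D d C c ->
    is_colim_Set (fun n => fob F (D n)) (fun n => fmap F (d n))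
                 (fob F C) (fun n => fmap F (c n)).

Definition is_ofun (F : Fun) : Prop := is_functor F /\ omega_cocontinuous F.

Definition Idfun : Fun := MkFun (fun A => A) (fun A B f => f).
Definition compF (X Z : Fun) : Fun :=
  MkFun (fun A => fob X (fob Z A)) (fun A B f => fmap X (fmap Z f)).

Definition idnat (F : Fun) : Nat F F := fun A x => x.
Definition vcomp {F G H : Fun} (b : Nat G H) (a : Nat F G) : Nat F H :=
  fun A x => b A (a A x).
Definition whiskerR {X Y : Fun} (Z : Fun) (a : Nat X Y) : Nat (compF X Z) (compF Y Z) :=
  fun A => a (fob Z A).
Definition whiskerL (X : Fun) {Z Z' : Fun} (f : Nat Z Z') : Nat (compF X Z) (compF X Z') :=
  fun A => fmap X (f A).
Definition pt_comp {Z1 Z2 : Fun} (e1 : Nat Idfun Z1) (e2 : Nat Idfun Z2)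
  : Nat Idfun (compF Z1 Z2) := fun A x => e1 (fob Z2 A) (e2 A x).

Definition is_pointed (Z : Fun) (e : Nat Idfun Z) : Prop := is_ofun Z /\ is_nat e.

Definition is_chain_End (Xs : nat -> Fun) (al : forall n, Nat (Xs n) (Xs (S n))) : Prop :=
  (forall n, is_ofun (Xs n)) /\ (forall n, is_nat (al n)).

Definition is_colim_End (Xs : nat -> Fun) (al : forall n, Nat (Xs n) (Xs (S n)))
  (C : Fun) (c : forall n, Nat (Xs n) C) : Prop :=
  is_ofun C /\ (forall n, is_nat (c n)) /\
  (forall n A x, c (S n) A (al n A x) = c n A x) /\
  forall (Y : Fun) (y : forall n, Nat (Xs n) Y),
    is_ofun Y -> (forall n, is_nat (y n)) ->
    (forall n A x, y (S n) A (al n A x) = y n A x) ->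
    exists u : Nat C Y, is_nat u /\ (forall n A x, u A (c n A x) = y n A x) /\
      forall u' : Nat C Y, is_nat u' -> (forall n A x, u' A (c n A x) = y n A x) ->
        forall A x, u' A x = u A x.

Record Fun2 : Type := MkFun2 {
  hob : Fun -> Fun ;
  hmap : forall X Y : Fun, Nat X Y -> Nat (hob X) (hob Y) }.
Arguments hmap _ {X Y} _ _ _.

Definition is_endo_omega (H : Fun2) : Prop :=
  (forall X, is_ofun X -> is_ofun (hob H X)) /\
  (forall X Y (a : Nat X Y), is_ofun X -> is_ofun Y -> is_nat a -> is_nat (hmap H a)) /\
  (forall X, is_ofun X -> forall A x, hmap H (idnat X) A x = x) /\
  (forall X Y W (a : Nat X Y) (b : Nat Y W), is_ofun X -> is_ofun Y -> is_ofun W ->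
      is_nat a -> is_nat b ->
      forall A x, hmap H (vcomp b a) A x = hmap H b A (hmap H a A x)) /\
  (forall Xs al C c, is_chain_End Xs al -> is_colim_End Xs al C c ->
      is_colim_End (fun n => hob H (Xs n)) (fun n => hmap H (al n))
                   (hob H C) (fun n => hmap H (c n))).

Definition theta_ty (H : Fun2) : Type :=
  forall (X Z : Fun) (e : Nat Idfun Z), Nat (compF (hob H X) Z) (hob H (compF X Z)).

Definition is_strength (H : Fun2) (th : theta_ty H) : Prop :=
  (forall X Z e, is_ofun X -> is_pointed Z e -> is_nat (th X Z e)) /\
  (forall X X' Z e (a : Nat X X'), is_ofun X -> is_ofun X' -> is_nat a -> is_pointed Z e ->
     forall A x, hmap H (whiskerR Z a) A (th X Z e A x)
                 = th X' Z e A (hmap H a (fob Z A) x)) /\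
  (forall X Z Z' e e' (f : Nat Z Z'), is_ofun X -> is_pointed Z e -> is_pointed Z' e' ->
     is_nat f -> (forall A x, f A (e A x) = e' A x) ->
     forall A x, hmap H (whiskerL X f) A (th X Z e A x)
                 = th X Z' e' A (fmap (hob H X) (f A) x)) /\
  (forall X, is_ofun X -> forall A x, th X Idfun (idnat Idfun) A x = x) /\
  (forall X Z1 Z2 e1 e2, is_ofun X -> is_pointed Z1 e1 -> is_pointed Z2 e2 ->
     forall A x, th X (compF Z1 Z2) (pt_comp e1 e2) A x
                 = th (compF X Z1) Z2 e2 A (th X Z1 e1 (fob Z2 A) x)).

Record SArity : Type := MkSArity { ar_H : Fun2 ; ar_th : theta_ty ar_H }.

Definition is_sarity (a : SArity) : Prop :=
  is_endo_omega (ar_H a) /\ is_strength (ar_H a) (ar_th a).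

Definition SHom (a b : SArity) : Type :=
  forall X : Fun, Nat (hob (ar_H a) X) (hob (ar_H b) X).

Definition is_sarity_mor (a b : SArity) (m : SHom a b) : Prop :=
  (forall X, is_ofun X -> is_nat (m X)) /\
  (forall X Y (al : Nat X Y), is_ofun X -> is_ofun Y -> is_nat al ->
     forall A x, hmap (ar_H b) al A (m X A x) = m Y A (hmap (ar_H a) al A x)) /\
  (forall X Z e, is_ofun X -> is_pointed Z e ->
     forall A x, m (compF X Z) A (ar_th a X Z e A x) = ar_th b X Z e A (m X (fob Z A) x)).

Definition mor_eq {a b : SArity} (m n : SHom a b) : Prop :=
  forall X, is_ofun X -> forall A x, m X A x = n X A x.

Definition obj_eq (a b : SArity) : Prop :=
  exists p : ar_H a = ar_H b,
    forall X Z e, is_ofun X -> is_pointed Z e -> forall A x,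
      (match p in _ = H return theta_ty H with eq_refl => ar_th a end) X Z e A x
      = ar_th b X Z e A x.

Definition sid (a : SArity) : SHom a a := fun X A x => x.
Definition scomp {a b c : SArity} (m : SHom b c) (n : SHom a b) : SHom a c :=
  fun X A x => m X A (n X A x).

Definition compF2 (H K : Fun2) : Fun2 :=
  MkFun2 (fun X => hob H (hob K X)) (fun X Y a => hmap H (hmap K a)).

Definition sar_tensor (a b : SArity) : SArity :=
  MkSArity (compF2 (ar_H a) (ar_H b))
    (fun X Z e A x => hmap (ar_H a) (ar_th b X Z e) A (ar_th a (hob (ar_H b) X) Z e A x)).

Definition Id2 : Fun2 := MkFun2 (fun X => X) (fun X Y a => a).
Definition sar_unit : SArity := MkSArity Id2 (fun X Z e A x => x).

Definition tensor_mor {a a' b b' : SArity} (m : SHom a a') (n : SHom b b')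
  : SHom (sar_tensor a b) (sar_tensor a' b') :=
  fun X A x => m (hob (ar_H b') X) A (hmap (ar_H a) (n X) A x).

(* Main.v *)
Require Import Defs.
From Stdlib Require Import FunctionalExtensionality.

Lemma nat_ext (F G : Fun) (a b : Nat F G) : (forall A x, a A x = b A x) -> a = b.
Proof. intro h. apply functional_extensionality_dep; intro A.
  apply functional_extensionality; intro x; apply h. Qed.

Lemma hmap_ext (H : Fun2) X Y (a b : Nat X Y) : (forall A x, a A x = b A x) ->
  forall A x, hmap H a A x = hmap H b A x.
Proof. intros h; rewrite (nat_ext _ _ a b h); reflexivity. Qed.

Lemma ofun_comp X Z : is_ofun X -> is_ofun Z -> is_ofun (compF X Z).
Proof.
  intros [[X1 X2] Xc] [[Z1 Z2] Zc]. split; [split|].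
  - intros A x; simpl.
    transitivity (fmap X (fun a : fob Z A => a) x); [|apply X1].
    f_equal. apply functional_extensionality; intro; apply Z1.
  - intros A B C f g x; simpl. rewrite <- X2. f_equal.
    apply functional_extensionality; intro; apply Z2.
  - intros D d C c h. exact (Xc _ _ _ _ (Zc _ _ _ _ h)).
Qed.

Lemma nat_whiskerR X Y Z (a : Nat X Y) : is_nat a -> is_nat (whiskerR Z a).
Proof. intros h A B f x; unfold whiskerR; simpl; apply h. Qed.

Lemma nat_whiskerL X Z Z' (f : Nat Z Z') : is_functor X -> is_nat f -> is_nat (whiskerL X f).
Proof.
  intros [X1 X2] h A B g x; unfold whiskerL; simpl.
  rewrite <- !X2. f_equal. apply functional_extensionality; intro; apply h.
Qed.

Lemma nat_vcomp F G K (b : Nat G K) (a : Nat F G) : is_nat a -> is_nat b -> is_nat (vcomp b a).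
Proof. intros ha hb A B f x; unfold vcomp; rewrite ha, hb; reflexivity. Qed.

Lemma nat_id F : is_nat (idnat F).
Proof. intros A B f x; reflexivity. Qed.

Lemma ofun_functor X : is_ofun X -> is_functor X.
Proof. intros [h _]; exact h. Qed.
Lemma nat_whiskerL' X Z Z' (f : Nat Z Z') : is_ofun X -> is_nat f -> is_nat (whiskerL X f).
Proof. intros h; apply nat_whiskerL, ofun_functor, h. Qed.
Lemma mk_pointed Z e : is_ofun Z -> is_nat e -> is_pointed Z e.
Proof. split; auto. Qed.
#[local] Hint Resolve ofun_comp nat_whiskerR nat_vcomp nat_id nat_whiskerL' mk_pointed : core.
Section T.
Variables (a b : SArity).
Hypotheses (ha : is_sarity a) (hb : is_sarity b).

Lemma tensor_sarity : is_sarity (sar_tensor a b).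
Proof.
  destruct a as [H rho], b as [K sig].
  destruct ha as [[Hof [Hnat [Hid [Hcmp Hcol]]]] [Rnat [RX [RZ [R1 R2]]]]].
  destruct hb as [[Kof [Knat [Kid [Kcmp Kcol]]]] [Snat [SX [SZ [S1 S2]]]]].
  simpl in *. split; [split; [|split; [|split; [|split]]]|split; [|split; [|split; [|split]]]]; simpl.
  - auto.
  - auto.
  - intros X hX A x. rewrite (hmap_ext H _ _ (hmap K (idnat X)) (idnat _)); auto.
  - intros X Y W al be hX hY hW hal hbe A x.
    rewrite (hmap_ext H _ _ (hmap K (vcomp be al)) (vcomp (hmap K be) (hmap K al))); auto.
  - intros Xs al C c hch hcol. apply Hcol.
    + destruct hch as [h1 h2]; split; intro n; try apply Knat; auto.
    + apply Kcol; auto.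
  - intros X Z e hX [hZ he]. apply nat_vcomp; eauto 7. apply Hnat; eauto 7.
  - intros X X' Z e al hX hX' hal [hZ he] A x.
    rewrite <- (Hcmp _ _ _ (sig X Z e) (hmap K (whiskerR Z al))); try solve [eauto 7].
    rewrite (hmap_ext H _ _ (vcomp (hmap K (whiskerR Z al)) (sig X Z e))
               (vcomp (sig X' Z e) (whiskerR Z (hmap K al)))).
    2:{ intros B y; unfold vcomp. apply SX; auto. }
    rewrite (Hcmp _ _ _ (whiskerR Z (hmap K al)) (sig X' Z e)); try solve [eauto 7].
    f_equal. apply RX; eauto.
  - intros X Z Z' e e' f hX [hZ he] [hZ' he'] hf hfe A x.
    rewrite <- (Hcmp _ _ _ (sig X Z e) (hmap K (whiskerL X f))); try solve [eauto 7].
    rewrite (hmap_ext H _ _ (vcomp (hmap K (whiskerL X f)) (sig X Z e))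
               (vcomp (sig X Z' e') (whiskerL (hob K X) f))).
    2:{ intros B y; unfold vcomp. apply SZ; auto. }
    rewrite (Hcmp _ _ _ (whiskerL (hob K X) f) (sig X Z' e')); try solve [eauto 7].
    f_equal. apply RZ; auto.
  - intros X hX A x. rewrite R1; auto.
    rewrite (hmap_ext H _ _ (sig X Idfun (idnat Idfun)) (idnat (hob K X))); auto.
  - intros X Z1 Z2 e1 e2 hX hZ1 hZ2 A x.
    rewrite R2; auto.
    rewrite <- RX; try solve [eauto 7].
    rewrite <- (Hcmp _ _ _ (whiskerR Z2 (sig X Z1 e1)) (sig (compF X Z1) Z2 e2)); try solve [eauto 7].
    apply hmap_ext. intros B y; unfold vcomp. apply S2; auto.
    all: destruct hZ1, hZ2; eauto 7.
Qed.
End T.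
Lemma unit_sarity : is_sarity sar_unit.
Proof.
  split; [split; [|split; [|split; [|split]]]|split; [|split; [|split; [|split]]]]; simpl; auto.
Qed.

Lemma tensor_mor_ok a a' b b' (m : SHom a a') (n : SHom b b') :
  is_sarity a -> is_sarity a' -> is_sarity b -> is_sarity b' ->
  is_sarity_mor a a' m -> is_sarity_mor b b' n ->
  is_sarity_mor (sar_tensor a b) (sar_tensor a' b') (tensor_mor m n).
Proof.
  destruct a as [H rho], a' as [H' rho'], b as [K sig], b' as [K' sig'].
  intros [[Hof [Hnat [Hid [Hcmp Hcol]]]] [Rnat [RX [RZ [R1 R2]]]]].
  intros [[Hof' [Hnat' [Hid' [Hcmp' Hcol']]]] [Rnat' [RX' [RZ' [R1' R2']]]]].
  intros [[Kof [Knat [Kid [Kcmp Kcol]]]] [Snat [SX [SZ [S1 S2]]]]].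
  intros [[Kof' [Knat' [Kid' [Kcmp' Kcol']]]] [Snat' [SX' [SZ' [S1' S2']]]]].
  intros [mnat [mX mZ]] [nnat [nX nZ]]. simpl in *. unfold tensor_mor; simpl.
  split; [|split].
  - intros X hX. change (is_nat (vcomp (m (hob K' X)) (hmap H (n X)))).
    apply nat_vcomp; auto.
  - intros X Y al hX hY hal A x.
    simpl. rewrite mX; auto.
    rewrite <- (Hcmp _ _ _ (n X) (hmap K' al)); auto.
    rewrite <- (Hcmp _ _ _ (hmap K al) (n Y)); auto.
    f_equal. apply hmap_ext. intros B y; unfold vcomp. apply nX; auto.
  - intros X Z e hX [hZ he] A x. simpl.
    rewrite <- mZ; try solve [eauto 7].
    rewrite mX; try solve [eauto 7].
    f_equal.
    rewrite <- RX; try solve [eauto 7].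
    rewrite <- (Hcmp _ _ _ (whiskerR Z (n X)) (sig' X Z e)); try solve [eauto 7].
    rewrite <- (Hcmp _ _ _ (sig X Z e) (n (compF X Z))); try solve [eauto 7].
    apply hmap_ext. intros B y; unfold vcomp, whiskerR. apply nZ; eauto.
Qed.

Theorem proposition2 :
  (* category: identities and composites are morphisms; unit and associativity laws *)
  (forall a, is_sarity a -> is_sarity_mor a a (sid a)) /\
  (forall a b c (n : SHom a b) (m : SHom b c),
      is_sarity a -> is_sarity b -> is_sarity c ->
      is_sarity_mor a b n -> is_sarity_mor b c m -> is_sarity_mor a c (scomp m n)) /\
  (forall a b (m : SHom a b), is_sarity a -> is_sarity b -> is_sarity_mor a b m ->
      mor_eq (scomp (sid b) m) m /\ mor_eq (scomp m (sid a)) m) /\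
  (forall a b c d (l : SHom a b) (m : SHom b c) (n : SHom c d),
      is_sarity a -> is_sarity b -> is_sarity c -> is_sarity d ->
      is_sarity_mor a b l -> is_sarity_mor b c m -> is_sarity_mor c d n ->
      mor_eq (scomp n (scomp m l)) (scomp (scomp n m) l)) /\
  (* tensor: unit object, tensor of objects, tensor of morphisms *)
  is_sarity sar_unit /\
  (forall a b, is_sarity a -> is_sarity b -> is_sarity (sar_tensor a b)) /\
  (forall a a' b b' (m : SHom a a') (n : SHom b b'),
      is_sarity a -> is_sarity a' -> is_sarity b -> is_sarity b' ->
      is_sarity_mor a a' m -> is_sarity_mor b b' n ->
      is_sarity_mor (sar_tensor a b) (sar_tensor a' b') (tensor_mor m n)) /\
  (* bifunctoriality of the tensor *)
  (forall a b, is_sarity a -> is_sarity b ->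
      mor_eq (tensor_mor (sid a) (sid b)) (sid (sar_tensor a b))) /\
  (forall a a' a'' b b' b'' (m : SHom a a') (m' : SHom a' a'')
          (n : SHom b b') (n' : SHom b' b''),
      is_sarity a -> is_sarity a' -> is_sarity a'' ->
      is_sarity b -> is_sarity b' -> is_sarity b'' ->
      is_sarity_mor a a' m -> is_sarity_mor a' a'' m' ->
      is_sarity_mor b b' n -> is_sarity_mor b' b'' n' ->
      mor_eq (tensor_mor (scomp m' m) (scomp n' n))
             (scomp (tensor_mor m' n') (tensor_mor m n))) /\
  (* strictness on objects *)
  (forall a b c, is_sarity a -> is_sarity b -> is_sarity c ->
      obj_eq (sar_tensor (sar_tensor a b) c) (sar_tensor a (sar_tensor b c))) /\
  (forall a, is_sarity a ->
      obj_eq (sar_tensor sar_unit a) a /\ obj_eq (sar_tensor a sar_unit) a) /\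
  (* strictness on morphisms *)
  (forall a a' b b' c c' (m : SHom a a') (n : SHom b b') (p : SHom c c'),
      is_sarity a -> is_sarity a' -> is_sarity b -> is_sarity b' ->
      is_sarity c -> is_sarity c' ->
      is_sarity_mor a a' m -> is_sarity_mor b b' n -> is_sarity_mor c c' p ->
      @mor_eq (sar_tensor (sar_tensor a b) c) (sar_tensor (sar_tensor a' b') c')
        (tensor_mor (tensor_mor m n) p) (tensor_mor m (tensor_mor n p))) /\
  (forall a a' (m : SHom a a'),
      is_sarity a -> is_sarity a' -> is_sarity_mor a a' m ->
      @mor_eq a a' (tensor_mor (sid sar_unit) m) m /\
      @mor_eq a a' (tensor_mor m (sid sar_unit)) m).
Proof.
  split; [|split; [|split; [|split; [|split; [|split; [|split; [|split; [|split; [|split; [|split; [|split]]]]]]]]]]].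
  - intros a ha. split; [|split]; intros; auto; unfold sid; intros ? ? ? ?; reflexivity.
  - intros a b c n m ha hb hc [n1 [n2 n3]] [m1 [m2 m3]]. unfold scomp.
    split; [|split].
    + intros X hX. change (is_nat (vcomp (m X) (n X))). apply nat_vcomp; auto.
    + intros X Y al hX hY hal A x. rewrite m2, n2; auto.
    + intros X Z e hX hZ A x. rewrite n3, m3; auto.
  - intros; split; intros ? ? ? ?; reflexivity.
  - intros; intros ? ? ? ?; reflexivity.
  - exact unit_sarity.
  - intros; apply tensor_sarity; auto.
  - intros; apply tensor_mor_ok; auto.
  - intros [H rho] [K sig] [[Hof [Hnat [Hid _]]] _] [[Kof _] _] X hX A x.
    unfold tensor_mor, sid; simpl. apply Hid; auto.
  - intros [H rho] a' a'' [K sig] b' b'' m m' n n' ha ha' ha'' hb hb' hb''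
      [m1 [m2 m3]] [m'1 [m'2 m'3]] [n1 [n2 n3]] [n'1 [n'2 n'3]] X hX A x.
    destruct ha as [[Hof [Hnat [Hid [Hcmp _]]]] _].
    destruct hb as [[Kof _] _]. destruct hb' as [[Kof' _] _]. destruct hb'' as [[Kof'' _] _].
    unfold tensor_mor, scomp; simpl in *. f_equal.
    rewrite m2; auto. f_equal.
    change (hmap H (vcomp (n' X) (n X)) A x = hmap H (n' X) A (hmap H (n X) A x)).
    apply Hcmp; auto.
  - intros [H rho] [K sig] [L tau] ha hb hc. exists eq_refl. simpl.
    intros X Z e hX hZ A x.
    destruct ha as [[Hof [Hnat [Hid [Hcmp _]]]] _].
    destruct hb as [[Kof [Knat _]] [Snat _]]. destruct hc as [[Lof _] [Tnat _]].
    symmetry.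
    change (hmap H (vcomp (hmap K (tau X Z e)) (sig (hob L X) Z e)) A (rho (hob K (hob L X)) Z e A x)
      = hmap H (hmap K (tau X Z e)) A (hmap H (sig (hob L X) Z e) A (rho (hob K (hob L X)) Z e A x))).
    apply Hcmp; auto. all: destruct hZ; eauto 8.
  - intros [H rho] ha. split.
    + exists eq_refl. simpl. reflexivity.
    + exists eq_refl. simpl. intros X Z e hX hZ A x.
      destruct ha as [[Hof [Hnat [Hid _]]] _]. apply (Hid (compF X Z)); auto.
      destruct hZ; auto.
  - intros [H rho] a' [K sig] b' c c' m n p ha ha' hb hb' hc hc' hm hn hp X hX A x.
    destruct ha as [[Hof [Hnat [Hid [Hcmp _]]]] _].
    destruct hb as [[Kof [Knat _]] _]. destruct hb' as [[Kof' _] _].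
    destruct hc as [[Lof _] _]. destruct hc' as [[Lof' _] _].
    destruct hn as [n1 _]. destruct hp as [p1 _].
    unfold tensor_mor; simpl in *. f_equal. symmetry.
    change (hmap H (vcomp (n (hob (ar_H c') X)) (hmap K (p X))) A x
      = hmap H (n (hob (ar_H c') X)) A (hmap H (hmap K (p X)) A x)).
    apply Hcmp; auto.
  - intros [H rho] a' m ha ha' hm. split.
    + intros X hX A x. reflexivity.
    + intros X hX A x. destruct ha as [[Hof [Hnat [Hid _]]] _].
      unfold tensor_mor, sid; simpl. f_equal. apply Hid; auto.
Qed.
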